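(* Let $d,n\in\mathbb{N}$, $p\ge1$, and $\Omega\subseteq\mathbb{R}^d$ compact. On the space $\mathcal{S}_{=n}(\Omega)$ of multisets of exactly $n$ elements of $\Omega$, endowed with the metric $W_1$, define $s(X;a)=\mathrm{sort}(a^TX)\in\mathbb{R}^n$, where $X=\{\!\!\{ x_1,\dots,x_n\}\!\!\}$, $a^TX=(a\cdot x_1,\dots,a\cdot x_n)$, $\mathrm{sort}$ sorts entries nondecreasingly, and $a$ is uniform on $S^{d-1}$; the output metric is $\ell_p$. Then $s$ is uniformly Lipschitz and lower Lipschitz in expectation.
   Context: $W_1(\{\!\!\{ x_j\}\!\!\},\{\!\!\{ y_j\}\!\!\})=\min_{\tau\in S_n}\sum_{j=1}^n\|x_j-y_{\tau(j)}\|_1$. A parametric function is uniformly Lipschitz if it is $L$-Lipschitz in $x$ for every parameter with a common $L$; it is lower Lipschitz in expectation if there is $c>0$ with $c^p\le\mathbb{E}_a\left[\left(\frac{\|s(X;a)-s(Y;a)\|_p}{W_1(X,Y)}\right)^p\right]$ whenever $W_1(X,Y)>0$. *)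

(* Defs.v *)
From HB Require Import structures.
From mathcomp Require Import all_boot all_order all_algebra all_fingroup.
From mathcomp Require Import all_classical all_reals all_analysis.
Set Implicit Arguments. Unset Strict Implicit. Unset Printing Implicit Defensive.
Import Order.TTheory GRing.Theory Num.Theory.
Import numFieldNormedType.Exports.
Local Open Scope classical_set_scope.
Local Open Scope ring_scope.

Definition borelRd (R : realType) (d : nat) :=
  g_sigma_algebraType (open : set (set 'rV[R]_d)).

Definition sphere (R : realType) (d : nat) : set 'rV[R]_d :=
  [set a | \sum_(i < d) a ord0 i ^+ 2 = 1].

Definition orthogonal_mx (R : realType) (d : nat) (Q : 'M[R]_d) : Prop :=
  Q *m Q^T = 1%:M.

(* mu is the uniform probability on S^{d-1}: the (unique) Borel probability
   measure on R^d carried by the sphere and invariant under all orthogonal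
   transformations. *)
Definition uniform_on_sphere (R : realType) (d : nat)
  (mu : probability (borelRd R d) R) : Prop :=
  mu (~` @sphere R d) = 0%E /\
  forall (Q : 'M[R]_d) (B : set (borelRd R d)), orthogonal_mx Q ->
    measurable B -> mu ((fun x : 'rV[R]_d => x *m Q) @^-1` B) = mu B.

Definition l1norm (R : realType) (d : nat) (v : 'rV[R]_d) : R :=
  \sum_(i < d) `|v ord0 i|.

(* multisets of n points of R^d, represented by n-tuples (all quantities below
   are invariant under reindexing) *)
Definition cost (R : realType) (d n : nat) (X Y : 'I_n -> 'rV[R]_d)
  (tau : 'S_n) : R :=
  \sum_(j < n) l1norm (X j - Y (tau j)).

Definition W1 (R : realType) (d n : nat) (X Y : 'I_n -> 'rV[R]_d) : R :=
  \big[Num.min/cost X Y 1%g]_(tau : 'S_n) cost X Y tau.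

Definition proj (R : realType) (d n : nat) (a : 'rV[R]_d)
  (X : 'I_n -> 'rV[R]_d) (j : 'I_n) : R :=
  \sum_(i < d) a ord0 i * X j ord0 i.

Definition s_embed (R : realType) (d n : nat) (X : 'I_n -> 'rV[R]_d)
  (a : 'rV[R]_d) : seq R :=
  sort <=%R [seq proj a X j | j <- enum 'I_n].

Definition lp_dist (R : realType) (n : nat) (p : R) (u v : seq R) : R :=
  (\sum_(j < n) `|u`_j - v`_j| `^ p) `^ p^-1.

Definition multiset_in (R : realType) (d n : nat) (Om : set 'rV[R]_d)
  (X : 'I_n -> 'rV[R]_d) : Prop := forall j, Om (X j).

(* Main.v *)
Require Import Defs.
From HB Require Import structures.
From mathcomp Require Import all_boot all_order all_algebra all_fingroup.
From mathcomp Require Import all_classical all_reals all_analysis.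
From mathcomp Require Import ring lra zify.
Set Implicit Arguments. Unset Strict Implicit. Unset Printing Implicit Defensive.
Import Order.TTheory GRing.Theory Num.Theory.
Import numFieldNormedType.Exports.
Local Open Scope classical_set_scope.
Local Open Scope ring_scope.

Section SortLemmas.
Variable R : realDomainType.

Lemma sort_shift n (f g : 'I_n -> R) (δ : R) :
  (forall j, f j <= g j + δ) -> forall i : nat, (i < n)%N ->
  (sort <=%R [seq f j | j <- enum 'I_n])`_i <=
  (sort <=%R [seq g j | j <- enum 'I_n])`_i + δ.
Proof.
move=> fg i ltin.
set S := [seq f j | j <- enum 'I_n]; set T := [seq g j | j <- enum 'I_n].
set s := sort _ S; set t := sort _ T.
have szs : size s = n by rewrite size_sort size_map size_enum_ord.
have szt : size t = n by rewrite size_sort size_map size_enum_ord.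
have ss : sorted <=%R s by apply: sort_sorted; exact: le_total.
have st : sorted <=%R t by apply: sort_sorted; exact: le_total.
rewrite leNgt; apply/negP => H.
pose P := fun x => t`_i + δ < x.
pose Q := fun x => t`_i < x.
pose Pl := fun x => x <= t`_i.
have cA : (n - i <= count P s)%N.
  rewrite -(cat_take_drop i s) count_cat.
  have -> : count P (drop i s) = (n - i)%N.
    suff : all P (drop i s) by rewrite all_count size_drop szs => /eqP.
    apply/(all_nthP 0) => k; rewrite size_drop szs => hk.
    rewrite nth_drop /P; apply: (lt_le_trans H).
    by apply: (le_sorted_leq_nth 0 ss); rewrite ?inE ?szs //; lia.
  lia.
have cB : (i.+1 <= count Pl t)%N.
  rewrite -[X in count _ X](cat_take_drop i.+1 t) count_cat.
  have -> : count Pl (take i.+1 t) = i.+1.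
    suff : all Pl (take i.+1 t) by rewrite all_count size_takel ?szt // => /eqP.
    apply/(all_nthP 0) => k; rewrite size_takel ?szt // => hk.
    rewrite nth_take // /Pl.
    by apply: (le_sorted_leq_nth 0 st); rewrite ?inE ?szt //; lia.
  lia.
have e1 : count P s = count P S.
  have pS : perm_eq s S by rewrite perm_sort.
  by move/seq.permP: pS; apply.
have e2 : count Q t = count Q T.
  have pS : perm_eq t T by rewrite perm_sort.
  by move/seq.permP: pS; apply.
have c3 : (count P S <= count Q T)%N.
  rewrite /S /T !count_map; apply: sub_count => j /=; rewrite /P /Q => h.
  by rewrite -(ltrD2r δ); apply: (lt_le_trans h).
have c4 : (count Pl t + count Q t = n)%N.
  rewrite -szt -(count_predC Pl); congr (_ + _)%N.
  by apply: eq_count => x; rewrite /Q /Pl /= ltNge.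
lia.
Qed.

Lemma sort_linf n (f g : 'I_n -> R) (δ : R) :
  (forall j, `|f j - g j| <= δ) -> forall i : nat, (i < n)%N ->
  `|(sort <=%R [seq f j | j <- enum 'I_n])`_i -
    (sort <=%R [seq g j | j <- enum 'I_n])`_i| <= δ.
Proof.
move=> h i lt.
have h1 := @sort_shift n g f δ _ i lt.
have h2 := @sort_shift n f g δ _ i lt.
rewrite ler_norml; apply/andP; split.
  suff : (sort <=%R [seq g j | j <- enum 'I_n])`_i <=
    (sort <=%R [seq f j | j <- enum 'I_n])`_i + δ by lra.
  apply: h1 => j; move: (h j); rewrite ler_norml => /andP[]; lra.
suff : (sort <=%R [seq f j | j <- enum 'I_n])`_i <=
    (sort <=%R [seq g j | j <- enum 'I_n])`_i + δ by lra.
apply: h2 => j; move: (h j); rewrite ler_norml => /andP[]; lra.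
Qed.

Lemma nth_map_enum n (F : 'I_n -> R) (i : 'I_n) :
  [seq F j | j <- enum 'I_n]`_i = F i.
Proof. by rewrite (nth_map i) ?size_enum_ord // nth_ord_enum. Qed.

Lemma sort_perm n (f : 'I_n -> R) : exists p : 'S_n,
  forall i : 'I_n, (sort <=%R [seq f j | j <- enum 'I_n])`_i = f (p i).
Proof.
have : perm_eq (sort <=%R [seq f j | j <- enum 'I_n]) [tuple f j | j < n].
  by rewrite perm_sort /=.
case/tuple_permP => p ->; exists p => i.
by rewrite -tnth_nth tnth_mktuple tnth_mktuple.
Qed.

Lemma sort_match n (f g : 'I_n -> R) : exists s : 'S_n,
  \sum_(i < n) `|(sort <=%R [seq f j | j <- enum 'I_n])`_i -
    (sort <=%R [seq g j | j <- enum 'I_n])`_i| =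
  \sum_(j < n) `|f j - g (s j)|.
Proof.
have [pf hf] := sort_perm f; have [pg hg] := sort_perm g.
exists (pf^-1 * pg)%g.
rewrite [RHS](reindex_inj (@perm_inj _ pf)) /=; apply: eq_bigr => i _.
by rewrite hf hg permM permK.
Qed.

End SortLemmas.

Section Geo.
Variables (R : realType) (d : nat).

Lemma cont_sum (I : Type) (r : seq I) (P : pred I) (F : I -> 'rV[R]_d -> R) :
  (forall i, continuous (F i)) -> continuous (fun a => \sum_(i <- r | P i) F i a).
Proof.
move=> cF; elim: r => [|i r IH] x.
  under eq_fun do rewrite big_nil; exact: cst_continuous.
under eq_fun do rewrite big_cons.
case: (P i).
  apply: (@continuousD _ R^o _ (F i) (fun a => \sum_(j <- r | P j) F j a)); [exact: cF | exact: IH].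
exact: IH.
Qed.

Lemma dot_cont (u : 'I_d -> R) : continuous (fun a : 'rV[R]_d => \sum_(i < d) a ord0 i * u i).
Proof.
apply: cont_sum => i x.
apply: (@continuousM R _ (fun a : 'rV[R]_d => a ord0 i) (fun=> u i)); [exact: coord_continuous | exact: cst_continuous].
Qed.

Lemma sq_cont (P : pred 'I_d) : continuous (fun a : 'rV[R]_d => \sum_(i < d | P i) a ord0 i ^+ 2).
Proof.
apply: cont_sum => i x.
apply: (@continuousM R _ (fun a : 'rV[R]_d => a ord0 i) (fun a => a ord0 i)); exact: coord_continuous.
Qed.

Lemma open_meas (A : set 'rV[R]_d) : open A -> measurable (A : set (borelRd R d)).
Proof. by move=> oA; apply: sub_sigma_algebra. Qed.

Lemma closed_meas (A : set 'rV[R]_d) : closed A -> measurable (A : set (borelRd R d)).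
Proof.
move=> cA; rewrite -[A]setCK; apply: measurableC; apply: open_meas.
by apply: closed_openC.
Qed.

Lemma lt_meas (f : 'rV[R]_d -> R) (e : R) : continuous f ->
  measurable ([set a | `|f a| < e] : set (borelRd R d)).
Proof.
move=> cf; apply: open_meas.
have -> : [set a | `|f a| < e] = (fun a => `|f a|) @^-1` [set x | x < e] by [].
apply: open_comp; last exact: open_lt.
move=> x _; apply: (continuous_comp (cf x)); exact: norm_continuous.
Qed.

Lemma eq0_meas (f : 'rV[R]_d -> R) : continuous f ->
  measurable ([set a | f a = 0] : set (borelRd R d)).
Proof.
move=> cf; apply: closed_meas.
have -> : [set a | f a = 0] = f @^-1` [set x | x = 0] by [].
by apply: closed_comp => [x _|]; [exact: cf | exact: closed_eq].
Qed.

Definition dotp (a w : 'rV[R]_d) : R := \sum_(i < d) a ord0 i * w ord0 i.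

Lemma dotpE (a w : 'rV[R]_d) : a *m w^T = (dotp a w)%:M.
Proof.
rewrite [LHS]mx11_scalar; congr (_%:M); rewrite !mxE; apply: eq_bigr => i _.
by rewrite mxE.
Qed.

Definition refl (w : 'rV[R]_d) : 'M[R]_d :=
  1%:M - (2 / dotp w w) *: (w^T *m w).

Lemma refl_apply (a w : 'rV[R]_d) :
  a *m refl w = a - (2 * dotp a w / dotp w w) *: w.
Proof.
rewrite /refl mulmxBr mulmx1 -scalemxAr mulmxA dotpE mul_scalar_mx scalerA.
by rewrite mulrAC.
Qed.

Lemma refl_orth (w : 'rV[R]_d) : dotp w w != 0 -> orthogonal_mx (refl w).
Proof.
move=> nz; rewrite /orthogonal_mx.
have tr : (refl w)^T = refl w.
  by rewrite /refl linearB /= trmx1 linearZ /= trmx_mul trmxK.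
rewrite tr /refl mulmxBr mulmx1 mulmxBl mul1mx -!scalemxAr -!scalemxAl.
rewrite mulmxA -(mulmxA _ w) dotpE mul_mx_scalar -scalemxAl scalerA scalerA.
set c := 2 / dotp w w; set W := w^T *m w.
have -> : c * c * dotp w w = c + c by rewrite /c; field.
rewrite scalerDl; set V := c *: W.
have -> : V - (V + V) = - V by rewrite opprD addrA subrr sub0r.
by rewrite opprK subrK.
Qed.
Lemma mulmx_coord_cont (Q : 'M[R]_d) (i : 'I_d) :
  continuous (fun a : 'rV[R]_d => (a *m Q) ord0 i).
Proof.
have -> : (fun a : 'rV[R]_d => (a *m Q) ord0 i) = (fun a => \sum_(j < d) a ord0 j * Q j i).
  by apply: funext => a; rewrite mxE.
exact: dot_cont.
Qed.

Lemma VQ_meas_gen (Q : 'M[R]_d) (k : nat) :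
  measurable ((fun a : 'rV[R]_d => a *m Q) @^-1`
     [set b : 'rV[R]_d | forall i : 'I_d, (i < k)%N -> b ord0 i = 0] : set (borelRd R d)).
Proof.
have -> : (fun a : 'rV[R]_d => a *m Q) @^-1`
     [set b : 'rV[R]_d | forall i : 'I_d, (i < k)%N -> b ord0 i = 0] =
   [set a : 'rV[R]_d | \sum_(i < d | (i < k)%N) (a *m Q) ord0 i ^+ 2 = 0].
  apply/seteqP; split => a /= H.
    by rewrite big1 // => i /H ->; rewrite expr0n.
  move=> i ik; move/eqP: H; rewrite psumr_eq0; last by move=> j _; exact: sqr_ge0.
  by move/allP => /(_ i (mem_index_enum _)); rewrite ik /= sqrf_eq0 => /eqP.
apply: eq0_meas; apply: cont_sum => i x.
apply: (@continuousM R _ (fun a : 'rV[R]_d => (a *m Q) ord0 i) (fun a => (a *m Q) ord0 i));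
  exact: mulmx_coord_cont.
Qed.
Lemma dotpC (a b : 'rV[R]_d) : dotp a b = dotp b a.
Proof. by apply: eq_bigr => i _; rewrite mulrC. Qed.

Lemma dotpBr (a b c : 'rV[R]_d) : dotp a (b - c) = dotp a b - dotp a c.
Proof.
rewrite /dotp -sumrB; apply: eq_bigr => i _; rewrite !mxE mulrBr //.
Qed.

Lemma dotpBl (a b c : 'rV[R]_d) : dotp (b - c) a = dotp b a - dotp c a.
Proof. by rewrite dotpC dotpBr dotpC (dotpC a c). Qed.

Lemma dotp_e (a : 'rV[R]_d) (i : 'I_d) : dotp a (\row_j (j == i)%:R) = a ord0 i.
Proof.
rewrite /dotp (bigD1 i) //= big1 => [|j ji]; first by rewrite !mxE eqxx mulr1 addr0.
by rewrite !mxE (negbTE ji) mulr0.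
Qed.
End Geo.

Section Sph.
Variables (R : realType) (d : nat) (mu : probability (borelRd R d.+1) R).
Hypothesis Hu : uniform_on_sphere mu.
Local Notation T := ('rV[R]_d.+1).

Lemma mu_fin (A : set T) : measurable (A : set (borelRd R d.+1)) ->
  mu A = (fine (mu A))%:E.
Proof.
move=> mA; rewrite fineK // ge0_fin_numE ?measure_ge0 //.
by apply: (le_lt_trans (probability_le1 _ mA)); rewrite ltry.
Qed.

Lemma mu_fine_ge0 (A : set T) : 0 <= fine (mu A).
Proof. by apply: fine_ge0; apply: measure_ge0. Qed.

Definition V (k : nat) : set T :=
  [set a | forall i : 'I_d.+1, (i < k)%N -> a ord0 i = 0].

Lemma V_meas k : measurable (V k : set (borelRd R d.+1)).
Proof.
have -> : V k = [set a : T | \sum_(i < d.+1 | (i < k)%N) a ord0 i ^+ 2 = 0].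
  apply/seteqP; split => a /= H.
    by rewrite big1 // => i /H ->; rewrite expr0n.
  move=> i ik; move/eqP: H; rewrite psumr_eq0; last by move=> j _; exact: sqr_ge0.
  by move/allP => /(_ i (mem_index_enum _)); rewrite ik /= sqrf_eq0 => /eqP.
by apply: eq0_meas; apply: sq_cont.
Qed.

Lemma sphere_meas : measurable (@sphere R d.+1 : set (borelRd R d.+1)).
Proof.
apply: closed_meas.
have -> : @sphere R d.+1 = (fun a : T => \sum_(i < d.+1) a ord0 i ^+ 2) @^-1` [set x | x = 1] by [].
apply: closed_comp => [x _|]; last exact: closed_eq.
exact: (@sq_cont R d.+1 predT).
Qed.

Lemma V_top : mu (V d.+1) = 0.
Proof.
apply/eqP; rewrite -measure_le0 -Hu.1; apply: le_measure; rewrite ?inE.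
- exact: V_meas.
- by apply: measurableC; exact: sphere_meas.
move=> a Va /= Sa; move: Sa; rewrite /sphere /= big1 => [/esym/eqP|i _].
  by rewrite oner_eq0.
by rewrite Va // expr0n.
Qed.
Lemma V_step k : (0 < k)%N -> (k < d.+1)%N -> mu (V k.+1) = 0 -> mu (V k) = 0.
Proof.
move=> k0 kd Hk1.
have h1 : (k.-1 < d.+1)%N by lia.
pose i1 : 'I_d.+1 := Ordinal h1; pose i2 : 'I_d.+1 := Ordinal kd.
have i12 : (i1 == i2) = false by apply/eqP => /(congr1 val) /=; lia.
pose w (t : R) : T := \row_j (if j == i2 then t else (j == i1)%:R).
have dw a t : dotp a (w t) = a ord0 i1 + t * a ord0 i2.
  rewrite /dotp (bigD1 i2) //= (bigD1 i1) ?i12 //= big1 => [|j /andP[j2 j1]].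
    by rewrite !mxE eqxx i12 eqxx /= mulr1 addr0 mulrC addrC.
  by rewrite !mxE (negbTE j2) (negbTE j1) mulr0.
have ww t : dotp (w t) (w t) = 1 + t ^+ 2.
  by rewrite dw !mxE eqxx i12 eqxx /= expr2.
have nz t : dotp (w t) (w t) != 0.
  by rewrite ww; apply: lt0r_neq0; rewrite ltr_pwDl // sqr_ge0.
pose P t := (fun a : T => a *m refl (w t)) @^-1` V k.
have mP t : mu (P t) = mu (V k) := Hu.2 _ _ (refl_orth (nz t)) (V_meas k).
have PM t : measurable (P t : set (borelRd R d.+1)) := VQ_meas_gen (refl (w t)) k.
have Pchar t a : P t a -> (forall i : 'I_d.+1, (i < k.-1)%N -> a ord0 i = 0) /\
    ((t ^+ 2 - 1) * a ord0 i1 - 2 * t * a ord0 i2 = 0).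
  rewrite /P /V /= => H; split.
    move=> i ik; have := H i ltac:(lia); rewrite refl_apply !mxE.
    have -> : (i == i2) = false by apply/eqP => /(congr1 val) /=; lia.
    have -> : (i == i1) = false by apply/eqP => /(congr1 val) /=; lia.
    by rewrite mulr0 subr0.
  have := H i1 ltac:(rewrite /=; lia); rewrite refl_apply !mxE i12 eqxx mulr1.
  rewrite dw ww => /eqP; rewrite subr_eq0 => /eqP e.
  have E : a ord0 i1 * (1 + t ^+ 2) = 2 * (a ord0 i1 + t * a ord0 i2).
    rewrite [in LHS]e; field; move: (nz t); rewrite ww //.
  have -> : (t ^+ 2 - 1) * a ord0 i1 - 2 * t * a ord0 i2 =
    a ord0 i1 * (1 + t ^+ 2) - 2 * (a ord0 i1 + t * a ord0 i2) by ring.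
  by rewrite E subrr.
have inter s t a : 0 <= s -> 0 <= t -> s != t -> P s a -> P t a -> V k.+1 a.
  move=> s0 t0 st /Pchar [Hlo e1] /Pchar [_ e2].
  have a1 : a ord0 i1 = 0.
    have : (s - t) * (s * t + 1) * a ord0 i1 = 0.
      have -> : (s - t) * (s * t + 1) * a ord0 i1 =
        t * ((s ^+ 2 - 1) * a ord0 i1 - 2 * s * a ord0 i2) -
        s * ((t ^+ 2 - 1) * a ord0 i1 - 2 * t * a ord0 i2) by ring.
      by rewrite e1 e2 !mulr0 subrr.
    move/eqP; rewrite !mulf_eq0 subr_eq0 (negbTE st) /=.
    have -> : (s * t + 1 == 0) = false by apply: gt_eqF; rewrite ltr_pwDr ?mulr_ge0.
    by move/eqP.
  have a2 : a ord0 i2 = 0.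
    have : (s + t) * a ord0 i2 = 0.
      have H2 : -2 * ((s + t) * a ord0 i2) = 0.
        have -> : -2 * ((s + t) * a ord0 i2) =
          ((s ^+ 2 - 1) * a ord0 i1 - 2 * s * a ord0 i2) +
          ((t ^+ 2 - 1) * a ord0 i1 - 2 * t * a ord0 i2) by rewrite a1; ring.
        by rewrite e1 e2 addr0.
      move/eqP: H2; rewrite mulf_eq0 => /orP[|/eqP //].
      by rewrite oppr_eq0 pnatr_eq0.
    move/eqP; rewrite mulf_eq0 => /orP[|/eqP //].
    rewrite paddr_eq0 // => /andP[/eqP s00 /eqP t00].
    by move: st; rewrite s00 t00 eqxx.
  move=> i ik; have [ilt|ige] := ltnP i k.-1; first exact: Hlo.
  have [hik|hik] := ltnP i k.
    by have -> : i = i1 by apply: val_inj => /=; lia.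
  by have -> : i = i2 by apply: val_inj => /=; lia.
set m := fine (mu (V k)).
have m0 : 0 <= m by exact: mu_fine_ge0.
have Mb : forall M : nat, M%:R * m <= 1.
  move=> M.
  pose D (j : 'I_M) := P j%:R `\` V k.+1.
  have mD j : measurable (D j : set (borelRd R d.+1)).
    by apply: measurableD; [exact: PM | exact: V_meas].
  have tD : trivIset setT D.
    apply/trivIsetP => i j _ _ ij; apply/seteqP; split=> a // [[Pi nVi] [Pj _]].
    apply: nVi; apply: (inter i%:R j%:R a) => //.
    by rewrite eqr_nat.
  have h2 : (\sum_(j < M) mu (D j) <= 1)%E.
    rewrite -(measure_bigsetU_ord mu predT mD tD).
    by apply: probability_le1; apply: bigsetU_measurable => j _; exact: mD.
  have h3 j : (mu (V k) <= mu (D j))%E.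
    rewrite -(mP j%:R); apply: (le_trans (y := mu (D j `|` V k.+1))).
      apply: (@le_measure _ _ _ mu (P j%:R) (D j `|` V k.+1)); rewrite ?inE //; first by apply: measurableU; [exact: mD | exact: V_meas].
      by move=> a Pa; case: (pselect (V k.+1 a)) => h; [right | left].
    apply: (le_trans (measureU2 _ (mD j) (V_meas k.+1))).
    have E x : x = 0%E -> (mu (D j) + x <= mu (D j))%E by move=> ->; rewrite adde0.
    by apply: E; exact: Hk1.
  have : (\sum_(j < M) mu (V k) <= 1)%E.
    by apply: le_trans h2; apply: lee_sum => j _; exact: h3.
  rewrite (mu_fin (V_meas k)) -/m sumEFin sumr_const card_ord lee_fin.
  by rewrite mulr_natl.
have : m = 0.
  apply/eqP; rewrite eq_le m0 andbT; rewrite leNgt; apply/negP => mpos.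
  have hm : 0 <= m^-1 by rewrite invr_ge0 ltW.
  have h := archi_boundP hm.
  have h' := Mb (Num.Def.archi_bound m^-1).
  have : m^-1 * m < (Num.Def.archi_bound m^-1)%:R * m by rewrite ltr_pM2r.
  rewrite mulVf ?gt_eqF // => h2.
  by have := lt_le_trans h2 h'; rewrite ltxx.
by move=> e; rewrite (mu_fin (V_meas k)) -/m e.
Qed.
Lemma V1_zero : mu [set a : T | a ord0 ord0 = 0] = 0.
Proof.
have H : forall j, (j <= d)%N -> mu (V (d.+1 - j)) = 0.
  elim=> [_|j IH jd]; first by rewrite subn0; exact: V_top.
  have e : (d.+1 - j)%N = (d.+1 - j.+1).+1 by lia.
  apply: V_step; [lia | lia | rewrite -e; apply: IH; lia].
have := H d (leqnn d); rewrite subSnn.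
have -> : V 1 = [set a : T | a ord0 ord0 = 0] => //.
apply/seteqP; split => a /= h.
  by apply: h.
by move=> i; rewrite ltnS leqn0 => /eqP i0; have -> : i = ord0 by apply: val_inj.
Qed.

Lemma house (u : T) : dotp u u = 1 -> exists Q : 'M[R]_d.+1,
  orthogonal_mx Q /\ forall a : T, (a *m Q) ord0 ord0 = dotp a u.
Proof.
move=> u1; pose e : T := \row_j (j == ord0)%:R.
have eu : dotp e u = u ord0 ord0 by rewrite dotpC dotp_e.
have ee : dotp e e = 1 by rewrite dotp_e mxE eqxx.
pose w := e - u.
have [hw|hw] := eqVneq (dotp w w) 0.
  have w0 : forall j, w ord0 j = 0.
    move=> j; move/eqP: hw; rewrite /dotp psumr_eq0; last by move=> i _; rewrite -expr2 sqr_ge0.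
    by move/allP => /(_ j (mem_index_enum _)) /=; rewrite -expr2 sqrf_eq0 => /eqP.
  have ue : u = e.
    apply/rowP => j; have := w0 j; rewrite /w !mxE => /eqP; rewrite subr_eq0 => /eqP <-.
    by [].
  exists 1%:M; split; first by rewrite /orthogonal_mx trmx1 mulmx1.
  by move=> a; rewrite mulmx1 ue dotp_e.
exists (refl w); split; first exact: refl_orth.
move=> a; rewrite refl_apply !mxE eqxx /=.
have dw : dotp a w = a ord0 ord0 - dotp a u by rewrite dotpBr dotp_e.
have dww : dotp w w = 2 * (1 - u ord0 ord0).
  rewrite /w dotpBl !dotpBr ee eu (dotpC u e) eu u1; ring.
have nz : 2 * (1 - u ord0 ord0) != 0 by rewrite -dww.
rewrite dw dww; field; by move: nz; rewrite mulf_eq0 negb_or => /andP[].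
Qed.

Lemma band_unit (u : T) (eta : R) : dotp u u = 1 ->
  mu [set a : T | `|dotp a u| < eta] = mu [set a : T | `|a ord0 ord0| < eta].
Proof.
move=> u1; have [Q [oQ HQ]] := house u1.
have mB : measurable ([set b : T | `|b ord0 ord0| < eta] : set (borelRd R d.+1)).
  by apply: lt_meas; exact: coord_continuous.
rewrite -(Hu.2 _ _ oQ mB); congr (mu _); apply/seteqP; split => a /=; by rewrite HQ.
Qed.

Lemma small_band (del : R) : 0 < del ->
  exists2 eta : R, 0 < eta & (mu [set a : T | (`|a ord0 ord0| < eta)%R] < del%:E)%E.
Proof.
move=> dp.
pose F (m : nat) := [set a : T | `|a ord0 ord0| < m.+1%:R^-1].
have mF m : measurable (F m : set (borelRd R d.+1)).
  by apply: lt_meas; exact: coord_continuous.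
have capF : \bigcap_m F m = [set a : T | a ord0 ord0 = 0].
  apply/seteqP; split => a /= h; last by move=> m _; rewrite /F /= h normr0 invr_gt0.
  apply/eqP; apply/negP => /negP nz.
  have hm : 0 <= `|a ord0 ord0|^-1 by rewrite invr_ge0.
  have hb := archi_boundP hm.
  have := h (Num.Def.archi_bound `|a ord0 ord0|^-1) I; rewrite /F /=.
  rewrite ltNge => /negP; apply.
  rewrite -[X in _ <= X]invrK lef_pV2 ?posrE ?invr_gt0 ?normr_gt0 //.
  by apply: ltW; apply: (lt_le_trans hb); rewrite ler_nat.
have Fni : nonincreasing_seq F.
  move=> m n mn; apply/subsetPset => a; rewrite /F /= => h.
  by apply: (lt_le_trans h); rewrite lef_pV2 ?posrE // ler_nat.
have mcap : measurable (\bigcap_m F m : set (borelRd R d.+1)).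
  by rewrite capF; apply: eq0_meas; exact: coord_continuous.
have F0 : (mu (F 0%N) < +oo)%E.
  by apply: (le_lt_trans (probability_le1 _ (mF 0%N))); rewrite ltry.
have cv := nonincreasing_cvg_mu F0 mF mcap Fni.
rewrite capF in cv.
have E l : l = 0%E -> (mu \o F) @ \oo --> l -> (mu \o F) @ \oo --> 0%E by move=> ->.
have {}cv := E _ V1_zero cv.
have := cv [set y | (y < del%:E)%E] (open_ereal_lt' (x := 0%E) (y := del%:E) ltac:(by rewrite lte_fin)).
case=> N _ HN; exists N.+1%:R^-1; first by rewrite invr_gt0.
exact: (HN N (leqnn N)).
Qed.
End Sph.

Section IntLB.
Variables (dd : measure_display) (T : measurableType dd) (R : realType).
Variable (mu : {measure set T -> \bar R}).

Lemma int_lb (f : T -> \bar R) (G : set T) (k : R) : 0 <= k -> measurable G ->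
  (forall a, (0 <= f a)%E) -> (forall a, G a -> (k%:E <= f a)%E) ->
  (k%:E * mu G <= \int[mu]_(a in setT) f a)%E.
Proof.
move=> k0 mG f0 fG; rewrite ge0_integralTE //.
apply: ereal_sup_ubound => /=.
exists (scale_nnsfun (indic_nnsfun R mG) k0).
  move=> a /=; rewrite measurable_realfun.mindicE.
  case: (boolP (a \in G)) => h; first by rewrite mulr1; apply: fG; rewrite inE in h.
  by rewrite mulr0.
rewrite (_ : HBNNSimple.NonNegSimpleFun.sort _ = cst k \* (\1_G)%R) ?sintegralrM; last first.
  by apply: funext => a /=; rewrite measurable_realfun.mindicE.
rewrite (_ : (\1_G)%R = HBNNSimple.NonNegSimpleFun.sort (indic_nnsfun R mG)) ?sintegralrM.
  by rewrite /= sintegral_indic.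
by apply: funext => a /=; rewrite measurable_realfun.mindicE.
Qed.
End IntLB.

Section Upper.
Variables (R : realType) (d n : nat).

Lemma projB (a : 'rV[R]_d) (X Y : 'I_n -> 'rV[R]_d) j k :
  Defs.proj a X j - Defs.proj a Y k = dotp a (X j - Y k).
Proof. by rewrite /Defs.proj /dotp -sumrB; apply: eq_bigr => i _; rewrite !mxE mulrBr. Qed.

Lemma l1norm_ge0 (w : 'rV[R]_d) : 0 <= l1norm w.
Proof. by apply: sumr_ge0 => i _. Qed.

Lemma cost_ge0 (X Y : 'I_n -> 'rV[R]_d) (t : 'S_n) : 0 <= cost X Y t.
Proof. by apply: sumr_ge0 => i _; exact: l1norm_ge0. Qed.

Lemma l1_le_cost (X Y : 'I_n -> 'rV[R]_d) (t : 'S_n) j : l1norm (X j - Y (t j)) <= cost X Y t.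
Proof.
rewrite /cost (bigD1 j) //= lerDl; apply: sumr_ge0 => i _; exact: l1norm_ge0.
Qed.

Lemma sphere_coord (a : 'rV[R]_d) i : sphere a -> `|a ord0 i| <= 1.
Proof.
rewrite /sphere /= => h.
have : a ord0 i ^+ 2 <= 1.
  rewrite -h (bigD1 i) //= lerDl; apply: sumr_ge0 => j _; exact: sqr_ge0.
rewrite -real_normK ?num_real // => h2.
by rewrite -(@ler_pXn2r _ 2) ?nnegrE // expr1n.
Qed.

Lemma dot_le_l1 (a w : 'rV[R]_d) : sphere a -> `|dotp a w| <= l1norm w.
Proof.
move=> sa; apply: (le_trans (ler_norm_sum _ _ _)); apply: ler_sum => i _.
rewrite normrM; rewrite -[X in _ <= X]mul1r; apply: ler_wpM2r => //.
exact: sphere_coord.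
Qed.

Lemma sort_perm_comp (f : 'I_n -> R) (t : 'S_n) :
  sort <=%R [seq f (t j) | j <- enum 'I_n] = sort <=%R [seq f j | j <- enum 'I_n].
Proof.
apply/perm_sort_leP; rewrite (map_comp f t); apply: perm_map.
apply: uniq_perm; [rewrite map_inj_uniq ?enum_uniq //; exact: perm_inj | exact: enum_uniq |].
move=> x; rewrite mem_enum; apply/mapP; exists (t^-1 x)%g; rewrite ?mem_enum ?permKV //.
Qed.

Lemma powRK (x p : R) : 0 <= x -> 0 < p -> (x `^ p) `^ p^-1 = x.
Proof. by move=> x0 p0; rewrite -powRrM mulfV ?gt_eqF // powRr1. Qed.

Lemma powR_mono (r x y : R) : 0 <= r -> 0 <= x -> x <= y -> x `^ r <= y `^ r.
Proof.
move=> r0 x0 xy; apply: (ge0_ler_powR r0); rewrite ?nnegrE //; exact: le_trans xy.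
Qed.

Lemma upper (p : R) (a : 'rV[R]_d) (X Y : 'I_n -> 'rV[R]_d) : 1 <= p -> sphere a ->
  lp_dist n p (s_embed X a) (s_embed Y a) <= n.+1%:R * W1 X Y.
Proof.
move=> p1 sa; have p0 : 0 < p by apply: lt_le_trans p1.
set N : R := n.+1%:R.
have N1 : 1 <= N by rewrite ler1n.
have N0 : 0 < N by apply: lt_le_trans N1.
have key t : lp_dist n p (s_embed X a) (s_embed Y a) <= N * cost X Y t.
  set C := cost X Y t; have C0 : 0 <= C by exact: cost_ge0.
  have lin : forall i : 'I_n, `|(s_embed X a)`_i - (s_embed Y a)`_i| <= C.
    move=> i; rewrite /s_embed -(sort_perm_comp (fun j => Defs.proj a Y j) t).
    apply: (sort_linf (f := fun j => Defs.proj a X j) (g := fun j => Defs.proj a Y (t j))) => // j.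
    rewrite projB; apply: le_trans (dot_le_l1 _ sa) _; exact: l1_le_cost.
  rewrite /lp_dist.
  have h1 : \sum_(j < n) `|(s_embed X a)`_j - (s_embed Y a)`_j| `^ p <= (N * C) `^ p.
    apply: (le_trans (y := \sum_(j < n) C `^ p)).
      by apply: ler_sum => j _; apply: powR_mono => //; exact: ltW.
    rewrite sumr_const card_ord powRM ?(ltW N0) // -mulr_natl.
    apply: ler_wpM2r; first exact: powR_ge0.
    apply: (le_trans (y := N)); first by rewrite ler_nat.
    exact: le1r_powR.
  rewrite -[X in _ <= X](powRK _ p0) ?mulr_ge0 ?(ltW N0) //.
  apply: powR_mono => //; first by rewrite invr_ge0 ltW.
  by apply: sumr_ge0 => j _; exact: powR_ge0.
rewrite -ler_pdivrMl //; apply: le_bigmin => [|t _]; by rewrite ler_pdivrMl // key.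
Qed.
End Upper.

Section Lower.
Variables (R : realType) (d : nat) (mu : probability (borelRd R d.+1) R).
Hypothesis Hu : uniform_on_sphere mu.
Local Notation T := ('rV[R]_d.+1).

Lemma sub_seq (I : Type) (r : seq I) (F : I -> set T) :
  (forall x, measurable (F x : set (borelRd R d.+1))) ->
  (mu (\big[setU/set0]_(x <- r) F x) <= \sum_(x <- r) mu (F x))%E.
Proof.
move=> mF; elim: r => [|x r IH]; first by rewrite !big_nil measure0.
rewrite !big_cons; apply: le_trans (measureU2 _ (mF x) _) _.
  by apply: bigsetU_measurable => y _; exact: mF.
exact: leeD2l.
Qed.

Lemma in_bigU (I : eqType) (r : seq I) (F : I -> set T) x a :
  x \in r -> F x a -> (\big[setU/set0]_(y <- r) F y) a.
Proof.
elim: r => [//|y r IH]; rewrite in_cons big_cons => /orP[/eqP <- h|h h']; first by left.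
by right; apply: IH.
Qed.

Lemma coord_le_norm (w : T) i : `|w ord0 i| <= Num.sqrt (dotp w w).
Proof.
have h : w ord0 i ^+ 2 <= dotp w w.
  rewrite /dotp (bigD1 i) //= -expr2 lerDl; apply: sumr_ge0 => j _; rewrite -expr2; exact: sqr_ge0.
rewrite -(@ler_pXn2r _ 2) ?nnegrE ?sqrtr_ge0 // sqr_sqrtr; last by apply: le_trans h; exact: sqr_ge0.
by rewrite real_normK ?num_real.
Qed.

Lemma band_bound (w : T) (eps eta : R) : 0 < eta -> eps = eta / d.+1%:R ->
  (mu [set a : T | (`|dotp a w| < eps * l1norm w)%R] <=
   mu [set a : T | (`|a ord0 ord0| < eta)%R])%E.
Proof.
move=> eta0 epsE.
have mB : measurable ([set a : T | `|dotp a w| < eps * l1norm w] : set (borelRd R d.+1)).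
  by apply: (lt_meas (f := fun a : T => dotp a w)); exact: (@dot_cont R d.+1 (fun i => w ord0 i)).
have [ww0|wwp] := eqVneq (dotp w w) 0.
  have w0 : forall i, w ord0 i = 0.
    move=> i; move/eqP: ww0; rewrite /dotp psumr_eq0; last by move=> j _; rewrite -expr2 sqr_ge0.
    by move/allP => /(_ i (mem_index_enum _)) /=; rewrite -expr2 sqrf_eq0 => /eqP.
  have -> : [set a : T | `|dotp a w| < eps * l1norm w] = set0.
    apply/seteqP; split => a //=; rewrite /l1norm big1 ?mulr0 ?normr_lt0 // => i _.
    by rewrite w0 normr0.
  by rewrite measure0; exact: measure_ge0.
have ww : 0 < dotp w w.
  rewrite lt_neqAle eq_sym wwp /=; apply: sumr_ge0 => i _; rewrite -expr2; exact: sqr_ge0.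
set r := Num.sqrt (dotp w w).
have r0 : 0 < r by rewrite sqrtr_gt0.
pose u : T := r^-1 *: w.
have du a : dotp a u = r^-1 * dotp a w.
  by rewrite /dotp mulr_sumr; apply: eq_bigr => i _; rewrite mxE mulrCA.
have uu : dotp u u = 1.
  rewrite du dotpC du mulrA -expr2 exprVn sqr_sqrtr ?mulVf //; exact: ltW.
rewrite -(band_unit Hu eta uu).
apply: le_measure; rewrite ?inE //.
  by apply: (lt_meas (f := fun a : T => dotp a u)); exact: (@dot_cont R d.+1 (fun i => u ord0 i)).
move=> a /= h; rewrite du normrM ger0_norm ?invr_ge0 ?(ltW r0) //.
rewrite mulrC ltr_pdivrMr //; apply: (lt_le_trans h).
have l1r : l1norm w <= d.+1%:R * r.
  rewrite /l1norm; apply: le_trans (ler_sum _ (fun i _ => coord_le_norm w i)) _.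
  by rewrite sumr_const card_ord mulr_natl.
rewrite epsE; have d0 : 0 < d.+1%:R :> R by [].
rewrite -mulrA; apply: ler_wpM2l; first exact: ltW.
by rewrite ler_pdivrMl.
Qed.
Lemma lower (n : nat) (p : R) : 1 <= p -> exists c : R, 0 < c /\
  forall X Y : 'I_n -> T, 0 < W1 X Y ->
  ((c `^ p)%:E <= \int[mu]_(a in setT)
     ((lp_dist n p (s_embed X a) (s_embed Y a) / W1 X Y) `^ p)%:E)%E.
Proof.
move=> p1; have p0 : 0 < p by apply: lt_le_trans p1.
pose del : R := (2 * (n * n).+1%:R)^-1.
have delp : 0 < del by rewrite invr_gt0 mulr_gt0.
have [eta eta0 heta] := small_band Hu delp.
pose eps := eta / d.+1%:R.
have eps0 : 0 < eps by rewrite divr_gt0.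
pose N : R := n.+1%:R.
have N0 : 0 < N by rewrite ltr0n.
pose k := (eps / N) `^ p.
have k0 : 0 < k by apply: powR_gt0; rewrite divr_gt0.
exists ((k / 2) `^ p^-1); split; first by apply: powR_gt0; rewrite divr_gt0.
move=> X Y Wpos.
have cpE : ((k / 2) `^ p^-1) `^ p = k / 2.
  by rewrite -powRrM mulVf ?gt_eqF // powRr1 // divr_ge0 // ltW.
pose Bs (jk : 'I_n * 'I_n) := [set a : T |
  (`|dotp a (X jk.1 - Y jk.2)| < eps * l1norm (X jk.1 - Y jk.2))%R].
pose B := \big[setU/set0]_(jk : 'I_n * 'I_n) Bs jk.
have mBs jk : measurable (Bs jk : set (borelRd R d.+1)).
  apply: (lt_meas (f := fun a : T => dotp a (X jk.1 - Y jk.2))).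
  exact: (@dot_cont R d.+1 (fun i => (X jk.1 - Y jk.2) ord0 i)).
have mB : measurable (B : set (borelRd R d.+1)).
  by apply: bigsetU_measurable => jk _; exact: mBs.
have muB : (mu B <= (2^-1)%:E)%E.
  apply: le_trans (sub_seq _ mBs) _.
  apply: (le_trans (y := \sum_(jk : 'I_n * 'I_n) del%:E)).
    apply: lee_sum => jk _; apply: (le_trans _ (ltW heta)).
    exact: (@band_bound (X jk.1 - Y jk.2) eps eta eta0 erefl).
  rewrite sumEFin lee_fin sumr_const card_prod card_ord.
  rewrite /del; set m := (n * n)%N.
  rewrite -[_ *+ m]mulr_natr -natr1.
  have m0 : (0 : R) <= m%:R by [].
  have h2 : (0 : R) < 2 * (m%:R + 1) by rewrite mulr_gt0 // ltr_pwDr.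
  rewrite mulrC ler_pdivrMr // mulrA mulVf ?mul1r ?ler_nat // pnatr_eq0.
have muG : ((2^-1)%:E <= mu (~` B))%E.
  rewrite probability_setC //.
  move: muB; rewrite (mu_fin mu mB) !lee_fin => h.
  lra.
have good a : (~` B) a -> forall j k,
    eps * l1norm (X j - Y k) <= `|Defs.proj a X j - Defs.proj a Y k|.
  move=> nB j k'; rewrite projB leNgt; apply/negP => h; apply: nB.
  by apply: (in_bigU (x := (j, k'))) => //; exact: mem_index_enum.
have fge a : (~` B) a ->
    (k%:E <= ((lp_dist n p (s_embed X a) (s_embed Y a) / W1 X Y) `^ p)%:E)%E.
  move=> /good g; rewrite lee_fin; apply: powR_mono; first exact: ltW.
    by rewrite divr_ge0 // ltW.
  have [s hs] := sort_match (fun j => Defs.proj a X j) (fun j => Defs.proj a Y j).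
  pose z := fun i : 'I_n => `|(s_embed X a)`_i - (s_embed Y a)`_i|.
  have hsum : eps * W1 X Y <= \sum_(i < n) z i.
    rewrite /z /s_embed hs.
    apply: (le_trans (y := eps * cost X Y s)).
      by apply: ler_wpM2l; [exact: ltW | exact: bigmin_le].
    rewrite /cost mulr_sumr; apply: ler_sum => j _; exact: g.
  have n0 : (0 < n)%N.
    case: (posnP n) => // n0'; move: hsum; rewrite big1 => [|[i hi] _]; last by exfalso; have : (i < n)%N := hi; rewrite n0'.
    by rewrite leNgt mulr_gt0.
  have [m _ hm] := Order.TotalTheory.arg_maxP z (i0 := Ordinal n0) (P := predT) isT.
  have h1 : \sum_(i < n) z i <= N * z m.
    apply: (le_trans (y := \sum_(i < n) z m)); first by apply: ler_sum => i _; exact: hm.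
    rewrite sumr_const card_ord -mulr_natl; apply: ler_wpM2r => //; first exact: normr_ge0.
    by rewrite ler_nat.
  have h2 : z m <= lp_dist n p (s_embed X a) (s_embed Y a).
    rewrite /lp_dist -[X in X <= _](powRK (normr_ge0 _) p0).
    apply: powR_mono; first by rewrite invr_ge0 ltW.
      exact: powR_ge0.
    rewrite (bigD1 m) //= lerDl; apply: sumr_ge0 => i _; exact: powR_ge0.
  rewrite ler_pdivlMr // mulrAC ler_pdivrMr //.
  apply: (le_trans hsum); apply: (le_trans h1).
  by rewrite mulrC ler_wpM2r.
have f0 a : (0 <= ((lp_dist n p (s_embed X a) (s_embed Y a) / W1 X Y) `^ p)%:E)%E.
  by rewrite lee_fin powR_ge0.
have G1 : ((k / 2)%:E <= k%:E * mu (~` B))%E.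
  rewrite (mu_fin mu (measurableC mB)) -EFinM lee_fin.
  move: muG; rewrite (mu_fin mu (measurableC mB)) lee_fin => h.
  rewrite -[k / 2]mulr1 mulrAC -mulrA; apply: ler_wpM2l; first exact: ltW.
  by rewrite mul1r.
apply: le_trans (int_lb mu (ltW k0) (measurableC mB) f0 fge).
by rewrite cpE.
Qed.
End Lower.


Unset Implicit Arguments.
Theorem mainTheorem7 (R : realType) (d n : nat) (p : R)
  (Om : set 'rV[R]_d) (mu : probability (borelRd R d) R) :
  1 <= p -> compact Om -> uniform_on_sphere mu ->
  (* uniformly Lipschitz *)
  (exists L : R, forall a : 'rV[R]_d, @sphere R d a ->
     forall X Y : 'I_n -> 'rV[R]_d, multiset_in Om X -> multiset_in Om Y ->
       lp_dist n p (s_embed X a) (s_embed Y a) <= L * W1 X Y) /\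
  (* lower Lipschitz in expectation *)
  (exists c : R, 0 < c /\
     forall X Y : 'I_n -> 'rV[R]_d, multiset_in Om X -> multiset_in Om Y ->
       0 < W1 X Y ->
       ((c `^ p)%:E <=
        \int[mu]_(a in setT)
           ((lp_dist n p (s_embed X a) (s_embed Y a) / W1 X Y) `^ p)%:E)%E).
Proof.
move=> p1 _ Hu; split.
  exists n.+1%:R => a sa X Y _ _; exact: upper p1 sa.
case: d Om mu Hu => [|d'] Om mu Hu.
  exfalso; have := Hu.1.
  have -> : ~` @sphere R 0 = setT.
    apply/seteqP; split => a //= _; rewrite /sphere /= big_ord0 => /esym/eqP.
    by rewrite oner_eq0.
  by rewrite probability_setT => /eqP; rewrite onee_eq0.
have [c [c0 hc]] := lower Hu n p1.
exists c; split => // X Y _ _ W; exact: hc.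
Qed.
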